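(* Let $F$ be a positive integer, $p\ge1$, and $n_1<n_2<\cdots<n_p<F$ positive integers with $d=\gcd\{n_1,\dots,n_p\}$ satisfying $d\nmid F$. For $i\in\{1,\dots,p\}$ let $d_i=\gcd\{n_1,\dots,n_i\}$; for $j\in\{1,\dots,p-1\}$ let $k_j=\max\{k\in\mathbb{N}\mid n_j+kd_j<n_{j+1}\}$, and let $k_p=\max\{k\in\mathbb{N}\mid n_p+kd_p<F\}$. Then $\{n_1,\dots,n_p\}$ is a $\mathrm{Sat}(F)$-set and $$\mathrm{Sat}(F)[\{n_1,\dots,n_p\}]=\{0\}\cup\bigcup_{j=1}^{p}\{n_j+kd_j\mid 0\le k\le k_j\}\cup\{x\in\mathbb{N}\mid x\ge F+1\}.$$
   Context: A numerical semigroup is a subset $S\subseteq\mathbb{N}$ closed under addition, containing $0$, with $\mathbb{N}\setminus S$ finite; its Frobenius number $\mathrm{F}(S)$ is the largest integer not in $S$. For $A\subseteq\mathbb{N}$ and $a\in A$, let $\mathrm{d}_A(a)=\gcd\{x\in A\mid x\le a\}$. A numerical semigroup $S$ is saturated if $s+\mathrm{d}_S(s)\in S$ for all $s\in S\setminus\{0\}$. For a positive integer $F$, $\mathrm{Sat}(F)$ denotes the set of all saturated numerical semigroups $S$ with $\mathrm{F}(S)=F$. Let $\Delta(F+1)=\{0\}\cup\{x\in\mathbb{N}\mid x\ge F+1\}$. A set $X\subseteq\mathbb{N}$ is a $\mathrm{Sat}(F)$-set if $X\cap\Delta(F+1)=\emptyset$ and there exists $S\in\mathrm{Sat}(F)$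 with $X\subseteq S$. For a $\mathrm{Sat}(F)$-set $X$, $\mathrm{Sat}(F)[X]$ denotes the intersection of all elements of $\mathrm{Sat}(F)$ containing $X$ (the smallest element of $\mathrm{Sat}(F)$ containing $X$). *)

(* Defs.v *)
From mathcomp Require Import all_boot.
Set Implicit Arguments. Unset Strict Implicit. Unset Printing Implicit Defensive.

Definition numerical_semigroup (S : pred nat) : Prop :=
  S 0 /\ (forall x y, S x -> S y -> S (x + y)) /\ (exists N, forall x, N <= x -> S x).

Definition frobenius_is (S : pred nat) (F : nat) : Prop :=
  ~~ S F /\ (forall x, F < x -> S x).

Definition dA (A : pred nat) (a : nat) : nat :=
  \big[gcdn/0]_(x < a.+1 | A x) x.

Definition saturated (S : pred nat) : Prop :=
  numerical_semigroup S /\ forall s, S s -> s != 0 -> S (s + dA S s).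

Definition inSat (F : nat) (S : pred nat) : Prop :=
  saturated S /\ frobenius_is S F.

Definition Delta (m : nat) (x : nat) : Prop := x = 0 \/ m <= x.

Definition SatSet (F : nat) (X : nat -> Prop) : Prop :=
  (forall x, X x -> ~ Delta F.+1 x) /\
  exists S, inSat F S /\ forall x, X x -> S x.

Definition SatClosure (F : nat) (X : nat -> Prop) (x : nat) : Prop :=
  forall S, inSat F S -> (forall y, X y -> S y) -> S x.

(* Main.v *)
Require Import Defs.
From mathcomp Require Import all_boot.
From mathcomp Require Import zify.
Set Implicit Arguments. Unset Strict Implicit. Unset Printing Implicit Defensive.

Definition ddf (n : nat -> nat) i := \big[gcdn/0]_(j < i.+1) n j.

Lemma dd_dvd n i k : k <= i -> ddf n i %| n k.
Proof.
move=> hk; rewrite /ddf.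
have hk' : k < i.+1 by [].
exact: (biggcdn_inf (Ordinal hk')).
Qed.

Lemma dvd_dd n i d : (forall k, k <= i -> d %| n k) -> d %| ddf n i.
Proof.
move=> h; apply/dvdn_biggcdP => k _; apply: h; exact: (ltn_ord k).
Qed.

Lemma dd_mono n i j : i <= j -> ddf n j %| ddf n i.
Proof.
move=> hij; apply: dvd_dd => k hk; apply: dd_dvd; exact: leq_trans hk hij.
Qed.

Lemma mono_le p (n : nat -> nat) : (forall i, i.+1 < p -> n i < n i.+1) ->
  forall i j, i <= j -> j < p -> n i <= n j.
Proof.
move=> h i j hij; elim: j hij => [|j IH] hij hj.
  by rewrite leqn0 in hij; rewrite (eqP hij).
rewrite leq_eqVlt in hij; case/orP: hij => [/eqP -> //|hij].
have := IH hij (ltnW hj); have := h j hj; lia.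
Qed.

Lemma mono_lt p (n : nat -> nat) : (forall i, i.+1 < p -> n i < n i.+1) ->
  forall i j, i < j -> j < p -> n i < n j.
Proof.
move=> h i j hij hj; case: j hij hj => // j hij hj.
have := @mono_le p n h i j hij (ltnW hj); have := h j hj; lia.
Qed.

Lemma dA_dvd (S : pred nat) y x : S x -> x <= y -> dA S y %| x.
Proof.
move=> hx hxy; rewrite /dA.
have hk : x < y.+1 by [].
exact: (biggcdn_inf (Ordinal hk)).
Qed.

Lemma dvd_dA (S : pred nat) y d : (forall x, S x -> x <= y -> d %| x) -> d %| dA S y.
Proof.
move=> h; apply/dvdn_biggcdP => k hk; apply: h => //; exact: (ltn_ord k).
Qed.

Lemma sat_step S : saturated S -> forall t s, S s -> s != 0 -> dA S s %| t -> S (s + t).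
Proof.
move=> [_ hsat] t; elim: t {-2}t (leqnn t) => [|T IH] t ht s hs hs0 hd.
  by move: ht; rewrite leqn0 => /eqP ->; rewrite addn0.
case: (posnP t) => [->|tpos]; first by rewrite addn0.
set e := dA S s.
have epos : 0 < e.
  have := dA_dvd hs (leqnn s); rewrite -/e; case: (posnP e) => // ->.
  by rewrite dvd0n => /eqP h; rewrite h in hs0.
have het : e <= t by apply: dvdn_leq.
have h1 := hsat s hs hs0; rewrite -/e in h1.
have h2 : dA S (s + e) %| e.
  apply: dvd_dA => x hx hxs; apply: dA_dvd => //; exact: leq_trans hxs (leq_addr _ _).
have hse0 : s + e != 0 by rewrite addn_eq0 (negbTE hs0).
have := IH (t - e) _ (s + e) h1 hse0 _.
  rewrite -addnA subnKC //; apply.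
  lia.
by apply: dvdn_trans h2 _; rewrite dvdn_sub.
Qed.

Definition Tb (F p : nat) (n : nat -> nat) (x : nat) : bool :=
  (x == 0) || (F < x) || ((x != F) && [exists j : 'I_p, (n (nat_of_ord j) <= x) && (ddf n j %| x)]).

Lemma TbP F p n x : Tb F p n x ->
  x = 0 \/ F < x \/ (x != F /\ exists j, [/\ j < p, n j <= x & ddf n j %| x]).
Proof.
rewrite /Tb; case/orP => [/orP[/eqP->|h]|/andP[hF /existsP[j /andP[h1 h2]]]]; auto.
right; right; split => //; exists j; split => //.
Qed.

Lemma maxidx p (n : nat -> nat) x j : j < p -> n j <= x ->
  exists m, [/\ m < p, j <= m, n m <= x & forall i, i < p -> n i <= x -> i <= m].
Proof.
move=> hj hnj.
have Pex : exists i, (i < p) && (n i <= x) by exists j; rewrite hj hnj.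
have Pbd : forall i, (i < p) && (n i <= x) -> i <= p by move=> i /andP[/ltnW].
case: (ex_maxnP Pex Pbd) => m /andP[hm hnm] hmax.
exists m; split => //; first by apply: hmax; rewrite hj hnj.
by move=> i hi hni; apply: hmax; rewrite hi hni.
Qed.

Section Main.
Variables (F p : nat) (n : nat -> nat).
Hypothesis hp : 0 < p.
Hypothesis hF : 0 < F.
Hypothesis hmono : forall i, i.+1 < p -> n i < n i.+1.
Hypothesis hd : ~~ (ddf n p.-1 %| F).

Lemma Tb_div m y : m < p -> n m <= y -> ddf n m %| y -> Tb F p n y.
Proof.
move=> hm hny hdy; rewrite /Tb.
case: (eqVneq y F) => hFy; last first.
  apply/orP; right; apply/andP; split; first by [].
  by apply/existsP; exists (Ordinal hm); rewrite hny hdy.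
subst y; case/negP: hd; apply: dvdn_trans (dd_mono n _) hdy.
by move: hm; case: p.
Qed.

Lemma Tb_add x y : Tb F p n x -> Tb F p n y -> Tb F p n (x + y).
Proof.
move=> /TbP[->|[hx|[hx [jx [hjx hnx hdx]]]]] //.
- move=> _; rewrite /Tb; apply/orP; left; apply/orP; right; lia.
move=> /TbP[->|[hy|[hy [jy [hjy hny hdy]]]]]; first by rewrite addn0 /Tb hx; apply/orP; right; rewrite andTb; apply/existsP; exists (Ordinal hjx); rewrite hnx hdx.
- rewrite /Tb; apply/orP; left; apply/orP; right; lia.
case: (leqP jx jy) => hj.
- apply: (Tb_div hjy); first by apply: leq_trans hny (leq_addl _ _).
  by rewrite dvdn_add // (dvdn_trans (dd_mono n hj)).
- apply: (Tb_div hjx); first by apply: leq_trans hnx (leq_addr _ _).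
  by rewrite dvdn_add // (dvdn_trans (dd_mono n (ltnW hj))).
Qed.

Lemma Tb_sat : inSat F (Tb F p n).
Proof.
split; last first.
  split; first by rewrite /Tb ltnn eqxx /= orbF; case: F hF.
  by move=> x hx; rewrite /Tb hx orbT.
split.
  split; first by [].
  split; first by move=> x y; apply: Tb_add.
  by exists F.+1 => x hx; rewrite /Tb hx orbT.
move=> s hs hs0.
move: (hs) => /TbP[hs0'|[hsF|[hsF [j [hj hnj hdj]]]]].
- by rewrite hs0' in hs0.
- by rewrite /Tb (leq_trans hsF (leq_addr _ _)) orbT.
case: (ltnP F s) => hFs; first by rewrite /Tb (leq_trans hFs (leq_addr _ _)) orbT.
have hsF' : s < F by rewrite ltn_neqAle hsF hFs.
have [m [hm hjm hnm hmax]] := maxidx hj hnj.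
have hdm : ddf n m %| s := dvdn_trans (dd_mono n hjm) hdj.
apply: (Tb_div hm); first by apply: leq_trans hnm (leq_addr _ _).
rewrite dvdn_add //; apply: dvd_dA => x hx hxs.
move: hx => /TbP[->|[hx|[_ [j' [hj' hnj' hdj']]]]] //.
- by move: (leq_ltn_trans hxs hsF'); rewrite ltnNge (ltnW hx).
apply: dvdn_trans hdj'; apply: dd_mono; apply: hmax => //.
exact: leq_trans hnj' hxs.
Qed.
End Main.

Theorem lemma43 (F p : nat) (n : nat -> nat) (kk : nat -> nat) :
  0 < F -> 1 <= p ->
  0 < n 0 ->
  (forall i, i.+1 < p -> n i < n i.+1) ->
  n p.-1 < F ->
  ~~ ((\big[gcdn/0]_(j < p) n j) %| F) ->
  let dd := fun i => \big[gcdn/0]_(j < i.+1) n j in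
  let nxt := fun i => if i.+1 < p then n i.+1 else F in
  (forall j, j < p ->
     n j + kk j * dd j < nxt j /\
     (forall k, n j + k * dd j < nxt j -> k <= kk j)) ->
  let X := fun x => exists2 i, i < p & x = n i in
  SatSet F X /\
  (forall x, SatClosure F X x <->
     (x = 0 \/ (exists j k, [/\ j < p, k <= kk j & x = n j + k * dd j]) \/ F.+1 <= x)).
Proof.
move=> hF hp hn0 hmono hnF hdF dd nxt hkk X.
have hd : ~~ (ddf n p.-1 %| F) by rewrite /ddf prednK.
have hsat := Tb_sat hp hF hd.
have hpos : forall i, i < p -> 0 < n i.
  move=> i hi; apply: leq_trans hn0 _; exact: (mono_le hmono (leq0n i) hi).
have conv : forall x, Tb F p n x <->
     (x = 0 \/ (exists j k, [/\ j < p, k <= kk j & x = n j + k * dd j]) \/ F.+1 <= x).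
  move=> x; split.
  - move=> /TbP[->|[hx|[hxF [j [hj hnj hdj]]]]]; [by left|by right; right|].
    case: (ltnP F x) => hFx; first by right; right.
    have hxF' : x < F by rewrite ltn_neqAle hxF hFx.
    have [m [hm hjm hnm hmax]] := maxidx hj hnj.
    have hdm : ddf n m %| x := dvdn_trans (dd_mono n hjm) hdj.
    have hdm' : ddf n m %| x - n m by rewrite dvdn_sub // dd_dvd.
    have eq : x = n m + (x - n m) %/ dd m * dd m.
      by rewrite /dd divnK // subnKC.
    right; left; exists m, ((x - n m) %/ dd m); split => //.
    apply: (hkk m hm).2; rewrite -eq /nxt; case: ifP => h //.
    rewrite ltnNge; apply/negP => hle.
    by have := hmax _ h hle; rewrite ltnn.
  - case=> [->|[[j [k [hj hk ->]]]|hx]]; first by rewrite /Tb eqxx.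
    + apply: (Tb_div hd hj); first exact: leq_addr.
      by rewrite dvdn_add ?dvdn_mull // dd_dvd.
    + by rewrite /Tb hx orbT.
split.
  split.
    move=> x [i hi ->] [h0|h].
      by have := hpos i hi; rewrite h0.
    have h1 : i <= p.-1 by rewrite -ltnS prednK.
    have h2 : p.-1 < p by rewrite prednK.
    have := @mono_le p n hmono i p.-1 h1 h2; lia.
  exists (Tb F p n); split => // x [i hi ->].
  by apply: (Tb_div hd hi) => //; rewrite dd_dvd.
move=> x; split.
  by move=> hcl; apply/conv; apply: hcl hsat _ => y [i hi ->]; apply: (Tb_div hd hi) => //; rewrite dd_dvd.
move=> hR S hS hX.
case: hR => [->|[[j [k [hj hk ->]]]|hx]].
- by case: hS => [[[h0 _] _] _].
- elim: k hk => [|k IH] hk; first by rewrite mul0n addn0; apply: hX; exists j.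
  rewrite mulSnr addnA; apply: (sat_step hS.1); first exact: IH (ltnW hk).
    by rewrite addn_eq0 negb_and -lt0n hpos.
  apply: (dvd_dd (n:=n)) => i hi; apply: dA_dvd; first by apply: hX; exists i => //; apply: leq_ltn_trans hi hj.
  apply: leq_trans (leq_addr _ _); apply: (mono_le hmono hi hj).
- by case: hS => _ [_ ]; apply.
Qed.
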